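(* Let $A$ be a Hermitian operator on $\mathbb{C}^N$ with $N$ distinct eigenvalues (non-degenerate), and $B$ a Hermitian operator on $\mathbb{C}^N$ with $N'$ distinct eigenvalues. If the KD distribution of $(A,B)$ distinguishes all states (i.e. $\rho\mapsto K^{A,B}_\rho$ is injective on density operators on $\mathbb{C}^N$), then $N'\ge\frac{N^2+N-1}{2N-1}$. In particular, for $N=2$ and $N=3$, $B$ must be non-degenerate.
   Context: A density operator is a positive semidefinite trace-one operator. Kirkwood–Dirac (KD) distribution: for Hermitian operators $A_1,\dots,A_n$ on $\mathbb{C}^N$ and a density operator $\rho$, define $\#^{K}_{A_1,\dots,A_n}(x)=(2\pi)^{-n}\int_{\mathbb{R}^n} e^{-is_1A_1}\cdots e^{-is_nA_n}\,e^{i s\cdot x}\,d^ns$ (inverse Fourier transform in the distributional sense), and $K^{A_1,\dots,A_n}_\rho(x)=\mathrm{Tr}[\#^{K}_{A_1,\dots,A_n}(x)\,\rho]$. *)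

(* Defs.v *)
From HB Require Import structures.
From mathcomp Require Import all_boot all_order all_algebra.
From mathcomp Require Import sesquilinear spectral.
From mathcomp Require Import complex.
From mathcomp Require Import reals.

Set Implicit Arguments.
Unset Strict Implicit.
Unset Printing Implicit Defensive.

Import Order.TTheory GRing.Theory Num.Theory.
Local Open Scope ring_scope.
Local Open Scope complex_scope.
Local Open Scope sesquilinear_scope.

Section KD.
Variable R : realType.
Local Notation C := (R[i]).

Definition hermitian_op (N : nat) (A : 'M[C]_N) : Prop := A \is hermsymmx.

Definition density (N : nat) (rho : 'M[C]_N) : Prop :=
  [/\ rho \is hermsymmx,
      (forall v : 'rV[C]_N, 0 <= (v *m rho *m v ^t*) 0 0)
    & \tr rho = 1].

Definition num_distinct_eigs (N : nat) (A : 'M[C]_N) (k : nat) : Prop :=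
  exists s : seq C, [/\ uniq s, size s = k & forall a, eigenvalue A a = (a \in s)].

(* Spectral projector of a Hermitian A at the real point x: the orthogonal
   projector onto the eigenspace ker (A - x), zero if x is not an eigenvalue. *)
Definition specproj (N : nat) (A : 'M[C]_N) (x : R) : 'M[C]_N :=
  proj_ortho (eigenspace A x%:C).

(* For Hermitian A, B
   the distribution (2pi)^-2 \int Tr[e^{-is1 A} e^{-is2 B} rho] e^{i s.x} ds
   equals  sum_x Tr[P_A(x1) P_B(x2) rho] delta_x ; we represent it by its
   (finitely supported) weight function x |-> Tr[P_A(x1) P_B(x2) rho]. *)
Definition KD (N : nat) (A B : 'M[C]_N) (rho : 'M[C]_N) : R * R -> C :=
  fun x => \tr (specproj A x.1 *m specproj B x.2 *m rho).

Definition KD_distinguishes (N : nat) (A B : 'M[C]_N) : Prop :=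
  forall rho1 rho2 : 'M[C]_N, density rho1 -> density rho2 ->
    KD A B rho1 = KD A B rho2 -> rho1 = rho2.

End KD.

(* Main.v *)
Require Import Defs.
From HB Require Import structures.
From mathcomp Require Import all_boot all_order all_algebra.
From mathcomp Require Import sesquilinear spectral complex reals.
From mathcomp Require Import ring zify lra.
From Stdlib Require Import FunctionalExtensionality.
Import Order.TTheory GRing.Theory Num.Theory.
Local Open Scope ring_scope.

Lemma arith_aux (N N' p q : nat) : (p.+1 <= N)%N -> (q.+1 <= N')%N ->
  (N * N <= 1 + 2 * p * q + p + q)%N -> (N * N + N + N' <= 2 * N * N' + 1)%N.
Proof.
move=> h1 h2 h.
have c : (N + N' + 2 * p * q + p + q <= 2 * N * N')%N.
  have [u eu] : exists u, N = (p.+1 + u)%N by exists (N - p.+1)%N; lia.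
  have [w ew] : exists w, N' = (q.+1 + w)%N by exists (N' - q.+1)%N; lia.
  rewrite eu ew; clear; nia.
lia.
Qed.

Module Helpers.
Local Open Scope sesquilinear_scope.
Set Implicit Arguments.
Unset Strict Implicit.
Unset Printing Implicit Defensive.


Section Gen.
Variable C : numClosedFieldType.

Local Notation "B ^!" :=
  (orthomx Num.conj_op (mx_of_hermitian (hermitian1mx _)) B) : matrix_set_scope.

Lemma hermP n (M : 'M[C]_n) : M \is hermsymmx <-> M^t* = M.
Proof.
split => [/is_hermitianmxP|h]; first by rewrite expr0 scale1r => <-.
by apply/is_hermitianmxP; rewrite expr0 scale1r h.
Qed.

Lemma adjM m n p (A : 'M[C]_(m, n)) (B : 'M[C]_(n, p)) :
  (A *m B)^t* = B^t* *m A^t*.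
Proof. by rewrite trmx_mul map_mxM. Qed.

Lemma adjD m n (A B : 'M[C]_(m, n)) : (A + B)^t* = A^t* + B^t*.
Proof. by apply/matrixP => i j; rewrite !mxE rmorphD. Qed.

Lemma adjN m n (A : 'M[C]_(m, n)) : (- A)^t* = - A^t*.
Proof. by apply/matrixP => i j; rewrite !mxE rmorphN. Qed.

Lemma adjZ m n a (A : 'M[C]_(m, n)) : (a *: A)^t* = a^* *: A^t*.
Proof. by apply/matrixP => i j; rewrite !mxE rmorphM. Qed.

Lemma adj1 n : (1%:M : 'M[C]_n)^t* = 1%:M.
Proof. by rewrite trmx1 map_mx1. Qed.

Lemma tr_adj n (M : 'M[C]_n) : \tr (M^t*) = (\tr M)^*.
Proof. by rewrite trace_map_mx mxtrace_tr. Qed.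

Lemma proj_herm p n (U : 'M[C]_(p, n)) : (proj_ortho U)^t* = proj_ortho U.
Proof.
set P := proj_ortho U.
have h2 : (P <= U)%MS by rewrite -[P]mul1mx proj_ortho_sub.
have h1 : (1%:M - P <= U^!)%MS.
  by have := proj_ortho_compl_sub U (1%:M : 'M_n); rewrite mul1mx.
have h3 : (P <= (1%:M - P)^!)%MS.
  apply: submx_trans h2 _; by rewrite orthomx_sym.
have /orthomx1P h := h3.
rewrite adjD adjN adj1 mulmxDr mulmx1 mulmxN in h.
have e : P = P *m P^t* by apply/eqP; rewrite -subr_eq0 h.
by rewrite e adjM trmxCK -e.
Qed.


Lemma eig_orth n (A : 'M[C]_n) a b : A \is hermsymmx -> b^* = b -> a != b ->
  eigenspace A a *m (eigenspace A b)^t* = 0.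
Proof.
move=> /hermP hA hb nab.
set Ea := eigenspace A a; set Eb := eigenspace A b.
have ha : Ea *m A = a *: Ea by apply/eigenspaceP.
have hbb : Eb *m A = b *: Eb by apply/eigenspaceP.
have e1 : Ea *m A *m Eb^t* = a *: (Ea *m Eb^t*).
  by rewrite ha -scalemxAl.
have e2 : Ea *m A *m Eb^t* = b *: (Ea *m Eb^t*).
  by rewrite -mulmxA -[X in Ea *m (X *m _)]hA -adjM hbb adjZ hb scalemxAr.
have : (a - b) *: (Ea *m Eb^t*) = 0 by rewrite scalerBl -e1 -e2 subrr.
move/eqP; rewrite scaler_eq0 subr_eq0 (negbTE nab) /= => /eqP //.
Qed.

Lemma spec_decomp n (A : 'M[C]_n) : A \is hermsymmx ->
  exists rA : seq C, [/\ uniq rA, (forall a, a \in rA -> a^* = a),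
    (forall a, a \in rA -> eigenvalue A a),
    \sum_(a <- rA) proj_ortho (eigenspace A a) = 1%:M &
    forall a, a^* = a -> a \notin rA -> proj_ortho (eigenspace A a) = 0].
Proof.
move=> hA.
have Ah := orthomx_spectralP (hermitian_normalmx hA).
set U := spectralmx A in Ah; set d := spectral_diag A in Ah.
have Uu : U \in unitmx := spectral_unit A.
have UA : U *m A = diag_mx d *m U.
  by rewrite {1}Ah !mulmxA mulmxV // mul1mx.
have row_eig k : (row k U <= eigenspace A (d 0 k))%MS.
  apply/eigenspaceP; rewrite -row_mul UA mul_diag_mx.
  by apply/rowP => j; rewrite !mxE.
have dreal k : (d 0 k)^* = d 0 k.
  have /mxOverP /(_ 0 k) := hermitian_spectral_diag_real hA.
  by move/CrealP.
have rowU0 k : row k U != 0.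
  apply/negP => /eqP h0.
  have := congr1 (fun M => M *m invmx U) h0.
  rewrite -row_mul mulmxV // mul0mx => /rowP /(_ k); rewrite !mxE eqxx /=.
  by move/eqP; rewrite oner_eq0.
have orth k a : a^* = a -> a != d 0 k -> row k U *m proj_ortho (eigenspace A a) = 0.
  move=> ha nad; apply: proj_ortho_0; apply/orthomx1P.
  have /submxP [w ->] := row_eig k.
  by rewrite -mulmxA eig_orth // ?mulmx0 // eq_sym.
exists (undup [seq d 0 k | k <- enum 'I_n]); split.
- exact: undup_uniq.
- by move=> a; rewrite mem_undup => /mapP [k _ ->].
- move=> a; rewrite mem_undup => /mapP [k _ ->].
  apply: contraNN (rowU0 k) => /eqP h.
  by rewrite -submx0 -h row_eig.
- set S := \sum_(_ <- _) _.
  have US : U *m S = U.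
    apply/row_matrixP => k; rewrite row_mul mulmx_sumr.
    rewrite (bigD1_seq (d 0 k)) ?undup_uniq //=; last first.
      by rewrite mem_undup; apply/mapP; exists k; rewrite ?mem_enum.
    rewrite proj_ortho_id // big_seq_cond big1 ?addr0 // => a.
    rewrite mem_undup => /andP [/mapP [k' _ ->] h].
    by apply: orth; rewrite ?dreal // eq_sym.
  by rewrite -[S]mul1mx -(mulVmx Uu) -mulmxA US.
- move=> a ha ana.
  have : U *m proj_ortho (eigenspace A a) = 0.
    apply/row_matrixP => k; rewrite row_mul row0 orth //.
    apply: contraNN ana => /eqP ->; rewrite mem_undup.
    by apply/mapP; exists k; rewrite ?mem_enum.
  move=> h; by rewrite -[proj_ortho _]mul1mx -(mulVmx Uu) -mulmxA h mulmx0.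
Qed.


Lemma tr_mxvec n (K Y : 'M[C]_n) :
  \tr (K *m Y) = \sum_e (mxvec Y) 0 e * (mxvec K^T) 0 e.
Proof.
rewrite (reindex _ (curry_mxvec_bij _ _)) /=.
transitivity (\sum_i \sum_j Y i j * K j i).
  rewrite /mxtrace exchange_big; apply: eq_bigr => i _.
  rewrite mxE; apply: eq_bigr => j _; by rewrite mulrC.
rewrite pair_bigA; apply: eq_bigr => [[i j]] _ /=.
by rewrite !mxvecE mxE.
Qed.

Lemma exists_kernel n (Ks : seq 'M[C]_n) : (size Ks < n * n)%N ->
  exists2 X : 'M[C]_n, X != 0 & forall K, K \in Ks -> \tr (K *m X) = 0.
Proof.
move=> hs.
pose Mt : 'M[C]_(n * n, size Ks) := \matrix_(e, l) (mxvec (nth 0 Ks l)^T) 0 e.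
have rk : (0 < \rank (kermx Mt))%N.
  by rewrite mxrank_ker subn_gt0 (leq_ltn_trans (rank_leq_col Mt)).
have [i hi] : exists i, row i (kermx Mt) != 0.
  case: (pickP (fun i => row i (kermx Mt) != 0)) => [i hi|h]; first by exists i.
  exfalso; move: rk; rewrite lt0n mxrank_eq0 => /negP; apply; apply/eqP.
  by apply/row_matrixP => i; move: (h i) => /negbFE/eqP ->; rewrite row0.
set u := row i (kermx Mt).
have hu : u *m Mt = 0 by rewrite /u -row_mul mulmx_ker row0.
exists (vec_mx u); first by rewrite vec_mx_eq0.
move=> K hK.
pose l : 'I_(size Ks) := Ordinal (etrans (index_mem K Ks) hK).
have := congr1 (fun M : 'rV_(size Ks) => M 0 l) hu; rewrite !mxE => <-.
rewrite tr_mxvec vec_mxK; apply: eq_bigr => e _; by rewrite !mxE nth_index.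
Qed.


Lemma two_eq0 (x : C) : x + x = 0 -> x = 0.
Proof. by move=> h; have := mulrn_eq0 x 2; rewrite mulr2n h eqxx /= => /esym/eqP. Qed.

Lemma two_eq0mx n (X : 'M[C]_n) : X + X = 0 -> X = 0.
Proof.
move=> h; have := scaler_eq0 (2%:R : C) X.
by rewrite pnatr_eq0 /= scaler_nat mulr2n h eqxx => /esym/eqP.
Qed.

Lemma adj_tr0 n (K X : 'M[C]_n) : \tr (K^t* *m X) = 0 -> \tr (K *m X^t*) = 0.
Proof.
move=> h; rewrite -[LHS]conjCK -tr_adj adjM trmxCK mxtrace_mulC h.
by rewrite conjC0.
Qed.

Section Main.
Variables (n : nat) (P Q : C -> 'M[C]_n) (a0 b0 : C) (ra rb : seq C).
Hypothesis hP : forall a, a \in a0 :: ra -> (P a)^t* = P a.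
Hypothesis hQ : forall b, b \in b0 :: rb -> (Q b)^t* = Q b.
Hypothesis sP : \sum_(a <- a0 :: ra) P a = 1%:M.
Hypothesis sQ : \sum_(b <- b0 :: rb) Q b = 1%:M.

Definition Lst : seq 'M[C]_n :=
  1%:M :: [seq P a *m Q b | a <- ra, b <- rb] ++ [seq Q b *m P a | a <- ra, b <- rb]
   ++ [seq P a *m Q b0 + Q b0 *m P a | a <- ra]
   ++ [seq P a0 *m Q b + Q b *m P a0 | b <- rb].

Lemma size_Lst : size Lst = (1 + 2 * size ra * size rb + size ra + size rb)%N.
Proof.
rewrite /Lst /= !size_cat !size_map !size_allpairs.
lia.
Qed.

Lemma Lst_adj K : K \in Lst -> K^t* \in Lst.
Proof.
have ra0 a : a \in ra -> a \in a0 :: ra by rewrite inE orbC => ->.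
have rb0 b : b \in rb -> b \in b0 :: rb by rewrite inE orbC => ->.
rewrite /Lst inE => /orP [/eqP -> | ]; first by rewrite adj1 mem_head.
rewrite !mem_cat => /or4P [].
- move=> /allpairsP [[a b] /= [ha hb ->]].
  rewrite adjM hP ?ra0 // hQ ?rb0 //.
  rewrite inE !mem_cat; apply/orP; right; apply/or4P; constructor 2.
  by apply/allpairsP; exists (a, b).
- move=> /allpairsP [[a b] /= [ha hb ->]].
  rewrite adjM hP ?ra0 // hQ ?rb0 //.
  rewrite inE !mem_cat; apply/orP; right; apply/or4P; constructor 1.
  by apply/allpairsP; exists (a, b).
- move=> /mapP [a ha ->].
  rewrite adjD !adjM hP ?ra0 // hQ ?mem_head // addrC.
  rewrite inE !mem_cat; apply/orP; right; apply/or4P; constructor 3.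
  by apply/mapP; exists a.
- move=> /mapP [b hb ->].
  rewrite adjD !adjM hP ?mem_head // hQ ?rb0 // addrC.
  rewrite inE !mem_cat; apply/orP; right; apply/or4P; constructor 4.
  by apply/mapP; exists b.
Qed.


Lemma main_from_H (H : 'M[C]_n) : H^t* = H ->
  (forall K, K \in Lst -> \tr (K *m H) = 0) ->
  \tr H = 0 /\
  forall a b, a \in a0 :: ra -> b \in b0 :: rb -> \tr (P a *m Q b *m H) = 0.
Proof.
move=> hH hL.
have ra0 a : a \in ra -> a \in a0 :: ra by rewrite inE orbC => ->.
have rb0 b : b \in rb -> b \in b0 :: rb by rewrite inE orbC => ->.
have inL1 : 1%:M \in Lst by rewrite mem_head.
have inL2 a b : a \in ra -> b \in rb -> P a *m Q b \in Lst.
  move=> ha hb; rewrite inE !mem_cat; apply/orP; right; apply/or4P; constructor 1.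
  by apply/allpairsP; exists (a, b).
have inL3 a : a \in ra -> P a *m Q b0 + Q b0 *m P a \in Lst.
  move=> ha; rewrite inE !mem_cat; apply/orP; right; apply/or4P; constructor 3.
  by apply/mapP; exists a.
have inL4 b : b \in rb -> P a0 *m Q b + Q b *m P a0 \in Lst.
  move=> hb; rewrite inE !mem_cat; apply/orP; right; apply/or4P; constructor 4.
  by apply/mapP; exists b.
set f := fun a b => \tr (P a *m Q b *m H).
have conjf a b : a \in a0 :: ra -> b \in b0 :: rb ->
    (f a b)^* = \tr (Q b *m P a *m H).
  move=> ha hb; rewrite /f -tr_adj !adjM hH hP // hQ //.
  by rewrite mxtrace_mulC.
have trH : \tr H = 0 by rewrite -(hL _ inL1) mul1mx.
have c1 a b : a \in ra -> b \in rb -> f a b = 0.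
  by move=> ha hb; rewrite /f hL // inL2.
have gE a : \tr (P a *m H) = \sum_(b <- b0 :: rb) f a b.
  rewrite -[P a]mulmx1 -sQ mulmx_sumr mulmx_suml raddf_sum.
  by apply: eq_bigr.
have greal a : a \in a0 :: ra -> (\tr (P a *m H))^* = \tr (P a *m H).
  by move=> ha; rewrite -tr_adj adjM hH hP // mxtrace_mulC.
have hE b : \tr (Q b *m H) = \sum_(a <- a0 :: ra) f a b.
  rewrite -[Q b *m H]mul1mx -sP !mulmx_suml raddf_sum.
  by apply: eq_bigr => a _; rewrite mulmxA.
have hreal b : b \in b0 :: rb -> (\tr (Q b *m H))^* = \tr (Q b *m H).
  by move=> hb; rewrite -tr_adj adjM hH hQ // mxtrace_mulC.
have c2 a : a \in ra -> f a b0 = 0.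
  move=> ha.
  have e1 : f a b0 = \tr (P a *m H).
    rewrite gE big_cons big_seq big1 ?addr0 // => b hb; exact: c1.
  have e2 : f a b0 + (f a b0)^* = 0.
    rewrite conjf ?ra0 ?mem_head // /f -mxtraceD -mulmxDl.
    exact: hL (inL3 a ha).
  apply: two_eq0; rewrite {2}(_ : f a b0 = (f a b0)^*) //.
  by rewrite e1 greal ?ra0.
have c3 b : b \in rb -> f a0 b = 0.
  move=> hb.
  have e1 : f a0 b = \tr (Q b *m H).
    rewrite hE big_cons big_seq big1 ?addr0 // => a ha; exact: c1.
  have e2 : f a0 b + (f a0 b)^* = 0.
    rewrite conjf ?rb0 ?mem_head // /f -mxtraceD -mulmxDl.
    exact: hL (inL4 b hb).
  apply: two_eq0; rewrite {2}(_ : f a0 b = (f a0 b)^*) //.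
  by rewrite e1 hreal ?rb0.
have c4 : f a0 b0 = 0.
  have : \tr H = \sum_(a <- a0 :: ra) \tr (P a *m H).
    rewrite -[H in LHS]mul1mx -sP mulmx_suml raddf_sum. by apply: eq_bigr.
  rewrite big_cons big_seq big1; last first.
    move=> a ha; rewrite gE big_cons c2 // add0r big_seq big1 // => b hb.
    exact: c1.
  rewrite addr0 gE big_cons big_seq big1 ?addr0; last first.
    by move=> b hb; exact: c3.
  by rewrite trH.
split => // a b; rewrite !inE => /orP [/eqP -> | ha] /orP [/eqP -> | hb].
- exact: c4.
- exact: c3.
- exact: c2.
- exact: c1.
Qed.

End Main.

Lemma main_exists n (P Q : C -> 'M[C]_n) a0 b0 ra rb :
  (forall a, a \in a0 :: ra -> (P a)^t* = P a) ->
  (forall b, b \in b0 :: rb -> (Q b)^t* = Q b) ->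
  \sum_(a <- a0 :: ra) P a = 1%:M -> \sum_(b <- b0 :: rb) Q b = 1%:M ->
  (1 + 2 * size ra * size rb + size ra + size rb < n * n)%N ->
  exists H : 'M[C]_n, [/\ H != 0, H^t* = H, \tr H = 0 &
    forall a b, a \in a0 :: ra -> b \in b0 :: rb -> \tr (P a *m Q b *m H) = 0].
Proof.
move=> hP hQ sP sQ hs.
have [X X0 hX] : exists2 X : 'M[C]_n, X != 0 &
    forall K, K \in Lst P Q a0 b0 ra rb -> \tr (K *m X) = 0.
  by apply: exists_kernel; rewrite size_Lst.
have hX' K : K \in Lst P Q a0 b0 ra rb -> \tr (K *m X^t*) = 0.
  by move=> hK; apply: adj_tr0; apply: hX; apply: Lst_adj.
have gen H : H != 0 -> H^t* = H ->
    (forall K, K \in Lst P Q a0 b0 ra rb -> \tr (K *m H) = 0) ->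
    exists H : 'M[C]_n, [/\ H != 0, H^t* = H, \tr H = 0 &
    forall a b, a \in a0 :: ra -> b \in b0 :: rb -> \tr (P a *m Q b *m H) = 0].
  move=> H0 hH hL; have [t1 t2] := main_from_H hP hQ sP sQ hH hL.
  by exists H.
case: (eqVneq (X + X^t*) 0) => h1.
- apply: (gen ('i *: (X - X^t*))).
  + apply/negP => /eqP h2; move/negP: X0; apply; apply/eqP.
    have h3 : X - X^t* = 0.
      by apply/eqP; move/eqP: h2; rewrite scaler_eq0 (negbTE (neq0Ci C)).
    apply: two_eq0mx.
    by rewrite -[X in X + _](addrNK (X^t*)) h3 add0r addrC h1.
  + rewrite adjZ conjCi adjD adjN trmxCK scaleNr -scalerN opprB //.
  + move=> K hK; rewrite -scalemxAr mxtraceZ mulmxDr mulmxN mxtraceD.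
    by rewrite raddfN /= hX // hX' // subrr mulr0.
- apply: (gen (X + X^t*)) => //.
  + by rewrite adjD trmxCK addrC.
  + move=> K hK; by rewrite mulmxDr mxtraceD hX // hX' // addr0.
Qed.


Lemma tr_sq_ge0 n (H : 'M[C]_n) : H^t* = H -> 0 <= \tr (H *m H).
Proof.
move=> hH; rewrite /mxtrace sumr_ge0 // => i _; rewrite mxE sumr_ge0 // => j _.
have -> : H j i = (H i j)^* by rewrite -[in LHS]hH !mxE.
exact: mul_conjC_ge0.
Qed.

Lemma psd_sq n (M : 'M[C]_n) (v : 'rV[C]_n) : M^t* = M ->
  0 <= (v *m (M *m M) *m v^t*) 0 0.
Proof.
move=> hM.
have -> : v *m (M *m M) *m v^t* = (v *m M) *m (v *m M)^t*.
  by rewrite adjM hM !mulmxA.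
rewrite mxE sumr_ge0 // => j _; rewrite !mxE; exact: mul_conjC_ge0.
Qed.


Lemma zero_or n (A B H : 'M[C]_n) (rA rB : seq C) :
  (forall a, a^* = a -> a \notin rA -> proj_ortho (eigenspace A a) = 0) ->
  (forall b, b^* = b -> b \notin rB -> proj_ortho (eigenspace B b) = 0) ->
  (forall a b, a \in rA -> b \in rB ->
     \tr (proj_ortho (eigenspace A a) *m proj_ortho (eigenspace B b) *m H) = 0) ->
  forall a b, a^* = a -> b^* = b ->
     \tr (proj_ortho (eigenspace A a) *m proj_ortho (eigenspace B b) *m H) = 0.
Proof.
move=> zA zB hf a b ra rb.
case: (boolP (a \in rA)) => ha; last by rewrite zA // !mul0mx mxtrace0.
case: (boolP (b \in rB)) => hb; last by rewrite zB // mulmx0 mul0mx mxtrace0.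
exact: hf.
Qed.

End Gen.

Local Open Scope complex_scope.
Local Open Scope ring_scope.


Lemma key_ineq (R : realType) (N N' : nat) (A B : 'M[R[i]]_N) :
  (0 < N)%N -> hermitian_op A -> num_distinct_eigs A N ->
  hermitian_op B -> num_distinct_eigs B N' -> KD_distinguishes A B ->
  (N * N + N + N' <= 2 * N * N' + 1)%N /\ (N' <= N)%N.
Proof.
move=> N0 hA [sA [uA szA eA]] hB [sB [uB szB eB]] hKD.
have [rA [urA realA eigA sumA zA]] := spec_decomp hA.
have [rB [urB realB eigB sumB zB]] := spec_decomp hB.
have one_neq0 : (1%:M : 'M[R[i]]_N) != 0.
  apply/negP => /eqP /matrixP /(_ (Ordinal N0) (Ordinal N0)).
  by rewrite !mxE eqxx /= => /eqP; rewrite oner_eq0.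
case: rA urA realA eigA sumA zA => [|a0 ra] urA realA eigA sumA zA.
  by move: one_neq0; rewrite -sumA big_nil eqxx.
case: rB urB realB eigB sumB zB => [|b0 rb] urB realB eigB sumB zB.
  by move: one_neq0; rewrite -sumB big_nil eqxx.
have szrA : (size (a0 :: ra) <= N)%N.
  by rewrite -szA; apply: uniq_leq_size => // a ha; rewrite -eA; exact: eigA.
have szrB : (size (b0 :: rb) <= N')%N.
  by rewrite -szB; apply: uniq_leq_size => // b hb; rewrite -eB; exact: eigB.
have NN' : (N' <= N)%N.
  rewrite -szB -ltnS -(size_char_poly B); apply: max_poly_roots => //.
    exact: monic_neq0 (char_poly_monic B).
  by apply/allP => b hb; rewrite -eigenvalue_root_char eB.
suff h : (N * N <= 1 + 2 * size ra * size rb + size ra + size rb)%N.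
  split => //; move: szrA szrB => /= szrA szrB. exact: (arith_aux _ _ _ _ szrA szrB h).
rewrite leqNgt; apply/negP => hlt.
have [H [H0 hH trH hf]] := @main_exists _ N
  (fun a => proj_ortho (eigenspace A a)) (fun b => proj_ortho (eigenspace B b))
  a0 b0 ra rb (fun a _ => proj_herm _) (fun b _ => proj_herm _) sumA sumB hlt.
have hf' x y : \tr (specproj A x *m specproj B y *m H) = 0.
  rewrite /specproj.
  exact: (zero_or zA zB hf (conjc_real x) (conjc_real y)).
set T : R[i] := N%:R + \tr (H *m H).
have T0 : 0 < T.
  by rewrite /T -[X in X < _]addr0 ltr_leD ?ltr0n // tr_sq_ge0.
have Tr : T^* = T by apply/CrealP; exact: gtr0_real.
have Tn0 : T != 0 by rewrite gt_eqF.
set Mp := 1%:M + H; set Mm := 1%:M - H.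
have hMp : Mp^t* = Mp by rewrite /Mp adjD adj1 hH.
have hMm : Mm^t* = Mm by rewrite /Mm adjD adjN adj1 hH.
have eMp : Mp *m Mp = (1%:M + H *m H) + (H + H).
  rewrite /Mp mulmxDl !mulmxDr !mul1mx mulmx1.
  by rewrite -!addrA; congr (_ + _); rewrite [RHS]addrC addrA.
have eMm : Mm *m Mm = (1%:M + H *m H) - (H + H).
  rewrite /Mm mulmxDl !mulmxDr !mul1mx !mulmx1 !mulNmx !mulmxN opprK opprD.
  by rewrite -!addrA; congr (_ + _); rewrite [RHS]addrC addrA.
have trS : \tr (1%:M + H *m H) = T by rewrite mxtraceD mxtrace1.
have trD : \tr (H + H) = 0 by rewrite mxtraceD trH addr0.
have dens : forall M : 'M[R[i]]_N, M^t* = M -> \tr (M *m M) = T -> density (T^-1 *: (M *m M)).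
  move=> M hM trM; split.
  - by apply/hermP; rewrite adjZ adjM hM fmorphV; congr (_^-1 *: _); exact: Tr.
  - move=> v; rewrite -scalemxAr -scalemxAl mxE; apply: mulr_ge0.
      by rewrite invr_ge0 ltW.
    exact: psd_sq.
  - by rewrite mxtraceZ trM mulVf.
have KDeq : KD A B (T^-1 *: (Mp *m Mp)) = KD A B (T^-1 *: (Mm *m Mm)).
  apply: functional_extensionality => -[x y]; rewrite /KD /=.
  rewrite -!scalemxAr !mxtraceZ eMp eMm !mulmxDr !mxtraceD mulmxN raddfN /=.
  by rewrite !mulmxDr !mxtraceD hf' !addr0 oppr0 addr0.
have trMp : \tr (Mp *m Mp) = T by rewrite eMp mxtraceD trS trD addr0.
have trMm : \tr (Mm *m Mm) = T by rewrite eMm mxtraceD trS raddfN /= trD oppr0 addr0.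
have := hKD _ _ (dens Mp hMp trMp) (dens Mm hMm trMm) KDeq.
move/(congr1 (fun M => T *: M)); rewrite !scalerA mulfV // !scale1r eMp eMm.
move/addrI => e; move/negP: H0; apply; apply/eqP.
apply: two_eq0mx; apply: two_eq0mx; rewrite {1}e; exact: addNr.
Qed.

End Helpers.

Theorem corollary2 (R : realType) (N N' : nat) (A B : 'M[R[i]]_N) :
  (0 < N)%N ->
  hermitian_op A -> num_distinct_eigs A N ->
  hermitian_op B -> num_distinct_eigs B N' ->
  KD_distinguishes A B ->
  (N'%:R : R) >= ((N ^ 2 + N)%:R - 1) / ((2 * N)%:R - 1) /\
  ((N = 2 \/ N = 3) -> N' = N).
Proof.
move=> N0 hA eA hB eB hKD.
have [h NN'] := Helpers.key_ineq N0 hA eA hB eB hKD.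
split; last by case=> e; subst N; lia.
have h' : ((N * N + N + N')%:R <= (2 * N * N' + 1)%:R :> R) by rewrite ler_nat.
have N1 : (1 <= N%:R :> R) by rewrite ler1n.
rewrite !natrD !natrM in h'.
rewrite ler_pdivrMr; last by rewrite natrM subr_gt0; lra.
rewrite natrD natrX natrM; nra.
Qed.
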